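(* Let $G$ be a connected simple graph without bridges whose edge set is identified with $[d+1]$, let $B_1,\dots,B_n$ be the bases (spanning trees) of its graphic matroid, all of cardinality $k$, and let $V=(-e_{B_1},\dots,-e_{B_n})$ in $\mathbb{T}^d$. Let $\mathbb{K}$ be a field and $I=\langle x^{\mathbf{t}(p)}: p\in\mathbb{T}^d\rangle\subseteq\mathbb{K}[x_1,\dots,x_{d+1}]$ be the coarse type ideal, where $\mathbf{t}(p)$ is the coarse type of $p$ with respect to $V$ and $x^{\mathbf{t}}=x_1^{t_1}\cdots x_{d+1}^{t_{d+1}}$. Then $I$ is generated by the monomials $$x_{i_1}^{t_{i_1}}x_{i_2}^{t_{i_2}}\cdots x_{i_{d'+1}}^{t_{i_{d'+1}}}$$ where $d'\ge 0$, $i_1,\dots,i_{d'+1}\in[d+1]$ are pairwise distinct with $[d+1]\setminus\{i_1,\dots,i_{d'}\}$ containing a basis, and $$(t_{i_1},t_{i_2},\dots,t_{i_{d'+1}})=\big(b_{\{i_1\},\emptyset}+b_{\emptyset,\{i_1,\dots,i_{d'+1}\}},\,b_{\{i_2\},\{i_1\}},\,\dots,\,b_{\{i_{d'+1}\},\{i_1,\dots,i_{d'}\}}\big).$$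
   Context: Tropical arithmetic is min-plus; $\mathbb{T}^d=\mathbb{R}^{d+1}/\mathbb{R}(1,\dots,1)$. For $B\subseteq[d+1]$, $e_B=\sum_{i\in B}e_i$. For $m\in[d+1]$ let $\bar S_m=\{\xi\in\mathbb{T}^d:\xi_m=\min_i\xi_i\}$. For $V=(v_1,\dots,v_n)$ and $x\in\mathbb{T}^d$, $\operatorname{type}_V(x)=(T_1,\dots,T_{d+1})$ with $T_m=\{l\in[n]:v_l\in x+\bar S_m\}$, and the coarse type of $x$ is $(|T_1|,\dots,|T_{d+1}|)$. For $I,J\subseteq[d+1]$, $b_{I,J}$ is the number of bases $B$ with $I\subseteq B$ and $J\cap B=\emptyset$. *)

(* Defs.v *)
From HB Require Import structures.
From mathcomp Require Import all_boot all_order all_algebra.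
From mathcomp Require Import reals.
From mathcomp Require Import mpoly.
Set Implicit Arguments. Unset Strict Implicit. Unset Printing Implicit Defensive.
Import Order.TTheory GRing.Theory Num.Theory.
Local Open Scope ring_scope.

(* Graph with vertex set V and edge set 'I_n (n = d+1); edge e has endpoint set ends e. *)
Section Graph.
Variables (V : finType) (n : nat) (ends : 'I_n -> {set V}).

Definition adjF (F : {set 'I_n}) : rel V :=
  fun x y => [exists e in F, (x \in ends e) && (y \in ends e)].

Definition connectedF (F : {set 'I_n}) : bool :=
  [forall x, forall y, connect (adjF F) x y].

(* spanning tree = minimally connected spanning subgraph (basis of graphic matroid) *)
Definition spanning_tree (F : {set 'I_n}) : bool :=
  connectedF F && [forall e in F, ~~ connectedF (F :\ e)].

Definition simple_graph : Prop :=
  (forall e, #|ends e| = 2%N) /\ injective ends.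

Definition connected_graph : Prop := connectedF setT.

Definition bridgeless : Prop := forall e, connectedF (setT :\ e).

Definition bIJ (I J : {set 'I_n}) : nat :=
  #|[set B : {set 'I_n} | spanning_tree B && (I \subset B) && [disjoint J & B]]|.
End Graph.

Section Types.
Variables (R : realType) (V : finType) (n : nat) (ends : 'I_n -> {set V}).

(* the point -e_B of T^d (as a representative in R^(d+1)) *)
Definition negeB (B : {set 'I_n}) (i : 'I_n) : R := - (i \in B)%:R.

(* v in x + S_m : (v - x)_m = min_i (v - x)_i *)
Definition in_sector (v x : 'I_n -> R) (m : 'I_n) : bool :=
  [forall i, v m - x m <= v i - x i].

Definition coarse_type (x : 'I_n -> R) (m : 'I_n) : nat :=
  #|[set B : {set 'I_n} | spanning_tree ends B && in_sector (negeB B) x m]|.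
End Types.

Definition gen_ideal (n : nat) (K : comNzRingType) (S : {mpoly K[n]} -> Prop)
  (p : {mpoly K[n]}) : Prop :=
  exists s : seq ({mpoly K[n]} * {mpoly K[n]}),
    and (forall q, q \in s -> S q.2) (p = \sum_(q <- s) q.1 * q.2).

Section Monomials.
Variables (K : fieldType) (R : realType) (V : finType) (n : nat)
  (ends : 'I_n -> {set V}).

Definition coarse_type_monomial (x : 'I_n -> R) : {mpoly K[n]} :=
  \prod_(m < n) 'X_m ^+ coarse_type ends x m.

(* For the sequence i_1 :: rest = [:: i_1; i_2; ...; i_{d'+1}]:
   x_{i_1}^{b_{{i_1},0} + b_{0,{i_1..i_{d'+1}}}} *
   prod_{j} x_{i_{j+2}}^{b_{{i_{j+2}},{i_1..i_{j+1}}}} *)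
Definition gen_monomial (i1 : 'I_n) (rest : seq 'I_n) : {mpoly K[n]} :=
  'X_i1 ^+ (bIJ ends [set i1] set0 + bIJ ends set0 [set x in i1 :: rest])%N *
  \prod_(j < size rest)
     'X_(nth i1 rest j) ^+ bIJ ends [set nth i1 rest j] [set x in take j.+1 (i1 :: rest)].

(* i_1, ..., i_{d'+1} pairwise distinct and [d+1] \ {i_1..i_{d'}} contains a basis *)
Definition admissible (i1 : 'I_n) (rest : seq 'I_n) : Prop :=
  and (uniq (i1 :: rest))
    (exists B : {set 'I_n}, spanning_tree ends B && [disjoint [set x in belast i1 rest] & B]).
End Monomials.

(* Main.v *)
Require Import Defs.
From HB Require Import structures.
From mathcomp Require Import all_boot all_order all_algebra.
From mathcomp Require Import reals.
From mathcomp Require Import mpoly.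
From mathcomp Require Import ring lra.
Set Implicit Arguments. Unset Strict Implicit. Unset Printing Implicit Defensive.
Import Order.TTheory GRing.Theory Num.Theory.
Local Open Scope ring_scope.

Lemma gen_ideal_mono (n : nat) (K : comNzRingType) (S1 S2 : {mpoly K[n]} -> Prop) :
  (forall q, S1 q -> exists c q', S2 q' /\ q = c * q') ->
  forall p, gen_ideal S1 p -> gen_ideal S2 p.
Proof.
move=> H p [s [Hs ->]]; elim: s Hs => [|[a q] s IH] Hs.
  by exists [::]; split => //; rewrite !big_nil.
have [c [q' [Sq' ->]]] := H q (Hs (a, q) (mem_head _ _)).
have [s' [Hs' E]] : gen_ideal S2 (\sum_(q <- s) q.1 * q.2).
  by apply: IH => r hr; apply: Hs; rewrite inE hr orbT.
exists ((a * c, q') :: s'); split.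
  by move=> r; rewrite inE => /orP [/eqP -> // | /Hs'].
by rewrite !big_cons E /= mulrA.
Qed.

Lemma mono_div (n : nat) (K : comNzRingType) (g t : 'I_n -> nat) :
  (forall m, (g m <= t m)%N) ->
  \prod_(m < n) ('X_m : {mpoly K[n]}) ^+ t m =
  (\prod_(m < n) 'X_m ^+ (t m - g m)) * \prod_(m < n) 'X_m ^+ g m.
Proof.
move=> H; rewrite -big_split /=; apply: eq_bigr => m _.
by rewrite -exprD subnK.
Qed.

Lemma belast_take (T : Type) (x : T) (r : seq T) : belast x r = take (size r) (x :: r).
Proof. by elim: r x => [|y r IH] x //=; rewrite IH. Qed.

Lemma max_prefix (P : nat -> bool) (N : nat) : P 0%N ->
  exists j, [/\ (j <= N)%N, P j & (j < N)%N -> ~~ P j.+1].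
Proof.
move=> P0; elim: N => [|N [j [jN Pj Hj]]]; first by exists 0%N.
have [jN'|] := ltnP j N.
  by exists j; split => //; [exact: ltnW | move=> _; exact: Hj].
move=> Nj; have ej : j = N by apply/eqP; rewrite eqn_leq jN Nj.
subst j; case PN : (P N.+1).
  by exists N.+1; split => //; rewrite ltnn.
by exists N; split => //; rewrite PN.
Qed.

Lemma disjP (T : finType) (A B : {set T}) :
  (forall k, k \in A -> k \in B -> False) -> [disjoint A & B].
Proof.
move=> H; rewrite disjoint_subset; apply/subsetP => k kA; rewrite inE.
by apply/negP => kB; exact: (H k kA kB).
Qed.

Section Gen.
Variables (K : fieldType) (V : finType) (d : nat) (ends : 'I_d.+1 -> {set V}).
Notation T := 'I_d.+1.

Definition gexp (i1 : T) (rest : seq T) (m : T) : nat :=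
  if m == i1 then (bIJ ends [set i1] set0 + bIJ ends set0 [set x in i1 :: rest])%N
  else if m \in rest then bIJ ends [set m] [set x in take (index m rest).+1 (i1 :: rest)]
  else 0%N.

Lemma gen_monomialE (i1 : T) (rest : seq T) : uniq (i1 :: rest) ->
  gen_monomial K ends i1 rest = \prod_(m < d.+1) 'X_m ^+ gexp i1 rest m.
Proof.
move=> /= /andP [i1r ur]; rewrite /gen_monomial.
set F := fun m : T => ('X_m : {mpoly K[d.+1]}) ^+
   bIJ ends [set m] [set x in take (index m rest).+1 (i1 :: rest)].
have -> : \prod_(j < size rest) 'X_(nth i1 rest j) ^+
     bIJ ends [set nth i1 rest j] [set x in take j.+1 (i1 :: rest)] =
   \prod_(j < size rest) F (nth i1 rest j) :> {mpoly K[d.+1]}.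
  by apply: eq_bigr => j _; rewrite /F index_uniq.
rewrite -(big_mkord xpredT (fun j => F (nth i1 rest j))) -(big_nth i1 xpredT F).
rewrite (big_uniq _ ur) /= big_mkcond /=.
set e := (bIJ ends [set i1] set0 + bIJ ends set0 [set x in i1 :: rest])%N.
have -> : ('X_i1 : {mpoly K[d.+1]}) ^+ e =
   \prod_(m < d.+1) (if m == i1 then 'X_m ^+ e else 1).
  by rewrite -big_mkcond /= big_pred1_eq.
rewrite -big_split /=; apply: eq_bigr => m _; rewrite /gexp /F.
case: eqP => [->|_]; first by rewrite (negbTE i1r) mulr1.
by case: (m \in rest); rewrite ?mul1r ?expr0.
Qed.

End Gen.
Section Geo.
Variables (R : realType) (V : finType) (d : nat) (ends : 'I_d.+1 -> {set V}).
Notation T := 'I_d.+1.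

Lemma in_sectorE (x : T -> R) (B : {set T}) (m : T) :
  in_sector (negeB R B) x m = [forall i, x i + (i \in B)%:R <= x m + (m \in B)%:R].
Proof.
apply: eq_forallb => i; rewrite /negeB -[LHS]subr_ge0 -[RHS]subr_ge0.
by congr (0 <= _); ring.
Qed.

Lemma exists_tree : connected_graph ends -> exists B, spanning_tree ends B.
Proof.
move=> C; case: (@arg_minnP _ setT (connectedF ends) (fun F : {set T} => #|F|) C).
move=> F cF minF; exists F; rewrite /spanning_tree cF /=.
apply/forall_inP => e eF; apply/negP => cFe.
by have := minF _ cFe; rewrite (cardsD1 e F) eF add1n ltnn.
Qed.

Lemma disj0 (B : {set T}) : [disjoint set0 & B].
Proof. by apply: disjP => k; rewrite inE. Qed.

Lemma b01 (b : bool) : 0 <= (b%:R : R) /\ (b%:R : R) <= 1.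
Proof. by case: b; split => /=; rewrite ?lexx ?ler01. Qed.

Lemma dir2 (i1 : T) (rest : seq T) : uniq (i1 :: rest) ->
  exists x : T -> R, forall m, (coarse_type ends x m <= gexp ends i1 rest m)%N.
Proof.
move=> ul; set l := i1 :: rest.
have sl0 : (size l)%:R != 0 :> R by rewrite pnatr_eq0.
set c : R := (size l)%:R^-1.
have hc : (size l)%:R * c = 1 by rewrite mulfV.
have c0 : 0 < c by rewrite invr_gt0 ltr0n.
pose x (i : T) : R := if i \in l then - ((index i l)%:R * c) else -2.
have xl i : i \in l -> x i = - ((index i l)%:R * c) /\ (index i l)%:R + 1 <= (size l)%:R :> R.
  move=> il; rewrite /x il; split => //.
  by rewrite natr1 ler_nat index_mem.
have x1 : x i1 = 0 by rewrite /x mem_head /= eqxx mul0r oppr0.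
have xrng i : i \in l -> -1 < x i <= 0.
  move=> /xl [-> h]; have h0 : 0 <= (index i l)%:R :> R by [].
  apply/andP; split; nra.
have xlt i j : i \in l -> j \in l -> (index i l < index j l)%N -> x j < x i.
  move=> /xl [-> _] /xl [-> _] lt.
  have : (index i l)%:R + 1 <= (index j l)%:R :> R by rewrite natr1 ler_nat.
  move=> h; nra.
exists x => m; rewrite /coarse_type /gexp.
have [-> | mi1] := eqVneq m i1.
  apply: (@leq_trans #|[set B | spanning_tree ends B && ([set i1] \subset B) && [disjoint set0 & B]] :|:
     [set B | spanning_tree ends B && (set0 \subset B) && [disjoint [set y in l] & B]]|).
    apply: subset_leq_card; apply/subsetP => B; rewrite !inE in_sectorE.
    move=> /andP [tB /forallP H]; rewrite tB sub1set sub0set disj0 /=.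
    case i1B : (i1 \in B) => //=.
    apply: disjP => k; rewrite inE => kl kB.
    have := H k; rewrite kB i1B x1 /=; have := xrng k kl; lra.
  by rewrite cardsU leq_subr.
case: ifP => mr; last first.
  rewrite leqn0 cards_eq0; apply/eqP/setP => B; rewrite !inE in_sectorE.
  apply/negP => /andP [_ /forallP /(_ i1)].
  have ml : m \notin l by rewrite inE negb_or mi1 mr.
  rewrite x1 /x (negbTE ml); have := b01 (i1 \in B); have := b01 (m \in B); lra.
apply: subset_leq_card; apply/subsetP => B; rewrite !inE in_sectorE.
move=> /andP [tB /forallP H]; rewrite tB sub1set /=.
have ml : m \in l by rewrite inE mr orbT.
have im : index m l = (index m rest).+1 by rewrite /l /= eq_sym (negbTE mi1).
have mneg : x m < 0.
  by have := xlt i1 m (mem_head _ _) ml; rewrite im /= eqxx x1; apply.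
have mB : m \in B.
  apply/negPn/negP => mB; have := H i1; rewrite (negbTE mB) x1 /=.
  have := b01 (i1 \in B); lra.
rewrite mB /=; apply: disjP => k; rewrite inE => kt kB.
have kt' : k \in take (index m l) l by rewrite im.
have kl : k \in l := mem_take kt'.
have := H k; rewrite kB mB /=; rewrite in_take // in kt'.
have := xlt k m kl ml kt'; lra.
Qed.
End Geo.
Section Dir1.
Variables (R : realType) (V : finType) (d : nat) (ends : 'I_d.+1 -> {set V}).
Notation T := 'I_d.+1.

Lemma dir1 (x : T -> R) : connected_graph ends ->
  exists i1 rest, admissible ends i1 rest /\
     forall m, (gexp ends i1 rest m <= coarse_type ends x m)%N.
Proof.
move=> C.
pose r := fun i j : T => x j <= x i.
have r_tot : total r by move=> a b; rewrite /r le_total.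
have r_tr : transitive r by move=> b a c; rewrite /r => h1 h2; exact: le_trans h2 h1.
have r_refl : reflexive r by move=> a; rewrite /r lexx.
have s0_sorted : sorted r (sort r (enum T)) := sort_sorted r_tot _.
have s0_mem i : i \in sort r (enum T) by rewrite mem_sort mem_enum.
have s0_uniq : uniq (sort r (enum T)) by rewrite sort_uniq enum_uniq.
move: s0_sorted s0_mem s0_uniq.
case: (sort r (enum T)) => [_ /(_ ord0) //|im s0'] s0_sorted s0_mem s0_uniq.
have maxim i : x i <= x im.
  have := s0_mem i; rewrite inE => /orP [/eqP -> //|is0].
  have := order_path_min r_tr s0_sorted => /allP /(_ i is0).
  by rewrite /r.
pose W := fun i => x im - 1 <= x i.
have Wim : W im by rewrite /W; lra.
pose s' := [seq i <- s0' | W i].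
pose s := im :: s'.
have s_sorted : sorted r s.
  have := sorted_filter r_tr W s0_sorted; by rewrite /= Wim.
have s_uniq : uniq s.
  have := filter_uniq W s0_uniq; by rewrite /= Wim.
have s_mem i : (i \in s) = W i.
  have := s0_mem i; rewrite /s /s' !inE mem_filter.
  case/orP => [/eqP -> | ->]; first by rewrite eqxx Wim.
  by rewrite andbT; case: eqP => // ->.
pose Q := fun j => [exists B, spanning_tree ends B && [disjoint [set y in take j s] & B]].
have Q0 : Q 0%N.
  have [B tB] := exists_tree C; apply/existsP; exists B; rewrite tB /=.
  by apply: disjP => k; rewrite inE.
have [j0 [j0N Qj0 Hj0]] := @max_prefix Q (size s') Q0.
pose rest := take j0 s'.
have l_eq : im :: rest = take j0.+1 s by [].
have size_rest : size rest = j0 by rewrite size_takel.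
have l_uniq : uniq (im :: rest) by rewrite l_eq take_uniq.
have l_sub i : i \in im :: rest -> i \in s by rewrite l_eq => /mem_take.
have noW B : spanning_tree ends B -> [disjoint [set y in im :: rest] & B] ->
    forall i, i \in B -> ~~ W i.
  move=> tB D i iB; apply/negP => Wi.
  have [lt|ge] := ltnP j0 (size s').
    move: (Hj0 lt) => /negP; apply; apply/existsP; exists B.
    by rewrite tB -l_eq.
  have rest_eq : rest = s' by rewrite /rest take_oversize.
  have iL : i \in [set y in im :: rest] by rewrite inE rest_eq s_mem.
  by rewrite (disjointFr D iL) in iB.
exists im, rest; split.
  split => //; move/existsP: Qj0 => [B /andP [tB D]].
  exists B; rewrite tB /= belast_take size_rest l_eq take_takel //.
move=> m; rewrite /gexp /coarse_type.
have [-> | mim] := eqVneq m im.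
  set S1 := [set B | spanning_tree ends B && ([set im] \subset B) && [disjoint set0 & B]].
  set S2 := [set B | spanning_tree ends B && (set0 \subset B) && [disjoint [set y in im :: rest] & B]].
  have dS : [disjoint S1 & S2].
    apply: disjP => B; rewrite !inE sub1set => /andP [/andP [_ imB] _] /andP [_ D].
    have iL : im \in [set y in im :: rest] by rewrite inE mem_head.
    by rewrite (disjointFr D iL) in imB.
  have := (leq_card_setU S1 S2).2; rewrite dS => /eqP <-.
  apply: subset_leq_card; apply/subsetP => B; rewrite !inE in_sectorE.
  case/orP => /andP [/andP [tB H1] H2]; rewrite tB /=; apply/forallP => i.
    rewrite sub1set in H1; rewrite H1.
    have := maxim i; have := b01 R (i \in B); move=> [h0 h1] h2; rewrite /= ?mulr1n; lra.
  have imB : im \notin B.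
    apply/negP => imB; have := noW B tB H2 im imB; by rewrite Wim.
  rewrite (negbTE imB); have := maxim i.
  case iB : (i \in B); last by rewrite /= !mulr0n !addr0.
  have := noW B tB H2 i iB; rewrite /W -ltNge => h1 _.
  rewrite /= mulr1n mulr0n; lra.
case: ifP => mr //.
apply: subset_leq_card; apply/subsetP => B; rewrite !inE in_sectorE sub1set.
move=> /andP [/andP [tB mB] D]; rewrite tB /=; apply/forallP => i; rewrite mB.
have ml : m \in im :: rest by rewrite inE mr orbT.
have Wm : W m by rewrite -s_mem l_sub.
have := maxim i; rewrite /W in Wm.
case iB : (i \in B); last by rewrite /=; lra.
rewrite /=; move=> _.
case Wi : (W i); last by move/negbT: Wi; rewrite /W -ltNge => h; lra.
have is_ : i \in s by rewrite s_mem.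
set p := index m (im :: rest).
have pE : p = (index m rest).+1 by rewrite /p /= eq_sym (negbTE mim).
have pl : (p < j0.+1)%N by rewrite -size_rest /p index_mem.
have nit : i \notin take p s.
  rewrite -(take_takel s (ltnW pl)) -l_eq pE.
  apply/negP => it.
  have : i \in [set y in take (index m rest).+1 (im :: rest)] by rewrite in_set.
  by rewrite (disjointFl D iB).
have mE : m = nth im s p by rewrite -(nth_take _ pl) -l_eq nth_index.
rewrite in_take // -leqNgt in nit.
have ps : (p < size s)%N.
  by apply: (leq_trans pl); rewrite /s /= ltnS.
have is2 : index i s \in [pred n | (n < size s)%N] by rewrite inE index_mem.
have := @sorted_leq_nth _ r r_tr r_refl im s s_sorted p (index i s) ps is2 nit.
rewrite nth_index // -mE /r => h; lra.
Qed.
End Dir1.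

Theorem mainTheorem2 (K : fieldType) (R : realType) (V : finType) (d : nat)
  (ends : 'I_d.+1 -> {set V}) :
  simple_graph ends -> connected_graph ends -> bridgeless ends ->
  forall p : {mpoly K[d.+1]},
    gen_ideal (fun q => exists x : 'I_d.+1 -> R, q = coarse_type_monomial K ends x) p
    <->
    gen_ideal (fun q => exists (i1 : 'I_d.+1) (rest : seq 'I_d.+1),
                 and (admissible ends i1 rest) (q = gen_monomial K ends i1 rest)) p.
Proof.
move=> _ Hc _ p; split; apply: gen_ideal_mono.
  move=> q [x ->]; have [i1 [rest [adm Hle]]] := @dir1 R V d ends x Hc.
  have [u _] := adm.
  eexists; exists (gen_monomial K ends i1 rest); split.
    by exists i1, rest.
  rewrite (gen_monomialE _ _ u) /coarse_type_monomial; exact: mono_div.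
move=> q [i1 [rest [[u _] ->]]]; have [x Hle] := @dir2 R V d ends i1 rest u.
eexists; exists (coarse_type_monomial K ends x); split; first by exists x.
rewrite (gen_monomialE _ _ u) /coarse_type_monomial; exact: mono_div.
Qed.
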